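(* Let $n\ge3$, let $\overrightarrow{C_n}$ be an oriented cycle and $D$ a distance set of $\overrightarrow{C_n}$ with $\min(D)\ge2$. If $\overrightarrow{C_n}$ is $D$-antimagic, then $\overrightarrow{C_n}$ is unidirectional.
   Context: An oriented graph is a simple graph each of whose edges is given one direction (an arc $(u,v)$ goes from $u$ to $v$). For vertices $u,v$, $d(u,v)$ is the length of a shortest directed path from $u$ to $v$ ($d(u,u)=0$, $\infty$ if no path). A distance set of an oriented graph is a nonempty set $D$ of nonnegative integers each of which is a finite distance $d(u,v)$ for some pair of vertices. $N_D(v)=\{y : d(v,y)\in D\}$; for a bijection $f:V\to\{1,\dots,|V|\}$, $\omega_D(v)=\sum_{x\in N_D(v)}f(x)$ (empty sum $0$); $f$ is $D$-antimagic if distinct vertices have distinct $D$-weights, and the graph is $D$-antimagic if such an $f$ exists. An oriented cycle $\overrightarrow{C_n}$ is an orientation of the cycle on $v_1,\dots,v_n$. It is unidirectional if (up to relabeling) its arcs are $(v_i,v_{i+1})$, $1\le i\le n-1$, and $(v_n,v_1)$. *)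

(* Defs.v *)
From mathcomp Require Import all_boot.
Set Implicit Arguments. Unset Strict Implicit. Unset Printing Implicit Defensive.

Fixpoint reach_in (T : finType) (arc : rel T) (k : nat) (u v : T) : bool :=
  match k with
  | 0 => u == v
  | k'.+1 => [exists w, arc u w && reach_in arc k' w v]
  end.

(* [dist_eq arc u v k] : d(u,v) = k, i.e. k is the length of a shortest
   directed path from u to v (shortest walks and shortest paths agree). *)
Definition dist_eq (T : finType) (arc : rel T) (u v : T) (k : nat) : bool :=
  reach_in arc k u v && [forall m : 'I_k, ~~ reach_in arc m u v].

Definition distance_set (T : finType) (arc : rel T) (D : pred nat) : Prop :=
  (exists k, D k) /\ (forall k, D k -> exists u v, dist_eq arc u v k).

(* N_D(v) as a boolean predicate on vertices.  Finite distances are < #|T|,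
   so restricting k to 'I_#|T|.+1 loses nothing. *)
Definition in_ND (T : finType) (arc : rel T) (D : pred nat) (v y : T) : bool :=
  [exists k : 'I_#|T|.+1, D k && dist_eq arc v y k].

Definition D_weight (T : finType) (arc : rel T) (D : pred nat) (f : T -> nat)
  (v : T) : nat := \sum_(y : T | in_ND arc D v y) f y.

Definition labelling (T : finType) (f : T -> nat) : Prop :=
  injective f /\ (forall x, 1 <= f x <= #|T|).

Definition D_antimagic_labelling (T : finType) (arc : rel T) (D : pred nat)
  (f : T -> nat) : Prop :=
  labelling f /\ injective (D_weight arc D f).

Definition D_antimagic (T : finType) (arc : rel T) (D : pred nat) : Prop :=
  exists f : T -> nat, D_antimagic_labelling arc D f.

(* An oriented cycle on vertices v_0, ..., v_{n-1} (= 'I_n, in cyclic order):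
   the edge {i, i+1 mod n} is oriented i -> i+1 if o i, and i+1 -> i otherwise. *)
Definition cyc_arc (n : nat) (o : 'I_n -> bool) : rel 'I_n :=
  fun u v => (o u && (v == ordS u)) || (~~ o v && (u == ordS v)).

Definition unidirectional (n : nat) (arc : rel 'I_n) : Prop :=
  exists p : 'I_n -> 'I_n, bijective p /\
    forall x y : 'I_n, arc x y = (p y == ordS (p x)).

(* Main.v *)
Require Import Defs.
From mathcomp Require Import all_boot.
From mathcomp Require Import zify.

Section Aux.
Variable n : nat.
Variable o : 'I_n -> bool.
Local Notation arc := (cyc_arc o).

Lemma arc_out (u w : 'I_n) : arc u w ->
  (o u && (w == ordS u)) || (~~ o (ord_pred u) && (w == ord_pred u)).
Proof.
rewrite /cyc_arc; case/orP=> [->//|/andP[ow /eqP ->]].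
by rewrite ordSK ow eqxx orbT.
Qed.

Lemma val_iter m (x : 'I_n) : val (iter m (@ordS n) x) = (x + m) %% n.
Proof.
elim: m => [|m IH] /=; first by rewrite addn0 modn_small.
by rewrite IH /= -addn1 modnDml addn1 addnS.
Qed.

Lemma ivt (f : nat -> bool) N : f 0 -> ~~ f N -> exists m, (m < N) && f m && ~~ f m.+1.
Proof.
elim: N => [-> //|N IH] f0 fN.
case fNN: (f N).
  by exists N; rewrite ltnSn fNN fN.
have [m /andP[/andP[mN fm] fm1]] := IH f0 (negbT fNN).
by exists m; rewrite fm fm1 (ltn_trans mN (ltnSn _)).
Qed.

Lemma weight0 (D : pred nat) (f : 'I_n -> nat) v :
  (forall k, D k -> 2 <= k) ->
  (forall w, arc v w -> forall z, ~~ arc w z) -> D_weight arc D f v = 0.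
Proof.
move=> D2 H; rewrite /D_weight big_pred0 // => y.
apply/negbTE/negP; case/existsP=> k /andP[Dk /andP[r _]].
move: (D2 _ Dk) r; case: (nat_of_ord k) => [|[|k']] //= _.
case/existsP=> w /andP[aw /existsP[z /andP[az _]]].
by move: (H w aw z); rewrite az.
Qed.

End Aux.

Lemma rev_ordS n (y : 'I_n) : rev_ord (ordS y) = ord_pred (rev_ord y).
Proof.
apply: val_inj => /=.
have yn := ltn_ord y.
have [lt|eq] := ltnP y.+1 n.
  rewrite (modn_small lt).
  have -> : (n - y.+1 + n).-1 = (n - y.+2) + n by lia.
  rewrite modnDr modn_small //; lia.
have -> : y.+1 = n by lia.
rewrite modnn subnn add0n modn_small //; lia.
Qed.

Theorem mainTheorem6 (n : nat) (o : 'I_n -> bool) (D : pred nat) :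
  3 <= n ->
  distance_set (cyc_arc o) D ->
  (forall k, D k -> 2 <= k) ->
  D_antimagic (cyc_arc o) D ->
  unidirectional (cyc_arc o).
Proof.
move=> n3 _ D2 [f [_ finj]].
have Sneq : forall x : 'I_n, ordS x != x.
  move=> x; apply/eqP=> /(congr1 val) /=; have xn := ltn_ord x.
  have [lt|eq] := ltnP x.+1 n; first by rewrite modn_small //; lia.
  have -> : x.+1 = n by lia.
  rewrite modnn; lia.
have Pneq : forall x : 'I_n, ord_pred x != x.
  by move=> x; apply/eqP=> E; move: (Sneq (ord_pred x)); rewrite ord_predK E eqxx.
have sink : forall k : 'I_n, o k -> ~~ o (ordS k) -> forall z, ~~ cyc_arc o (ordS k) z.
  move=> k ok os z; apply/negP=> /arc_out; rewrite (negbTE os) /= ordSK ok.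
  by [].
have two : forall u v : 'I_n, u != v ->
   (forall w, cyc_arc o u w -> forall z, ~~ cyc_arc o w z) ->
   (forall w, cyc_arc o v w -> forall z, ~~ cyc_arc o w z) -> False.
  move=> u v uv Hu Hv; move/eqP: uv; apply; apply: finj.
  by rewrite (@weight0 n o D f u D2 Hu) (@weight0 n o D f v D2 Hv).
have nosink : forall k : 'I_n, o k -> ~~ o (ordS k) -> False.
  move=> k ok os.
  have Hs : forall w, cyc_arc o (ordS k) w -> forall z, ~~ cyc_arc o w z.
    by move=> w; move: (sink k ok os w) => /negP.
  case opk: (o (ord_pred k)).
    apply: (two k (ordS k)); [by rewrite eq_sym Sneq| |exact: Hs].
    move=> w /arc_out; rewrite opk ok /= orbF => /eqP ->; exact: sink.
  case oss: (o (ordS (ordS k))).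
  - pose g m := o (iter (2 + m) (@ordS n) k).
    have g0 : g 0 by [].
    have gN : ~~ g (n - 3).
      rewrite /g.
      have -> : iter (2 + (n - 3)) (@ordS n) k = ord_pred k.
        apply: val_inj; rewrite val_iter /=.
        have kn := ltn_ord k.
        have -> : k + (2 + (n - 3)) = (k + n).-1 by lia.
        by [].
      by rewrite opk.
    have [m /andP[/andP[mN gm] gm1]] := @ivt g (n-3) g0 gN.
    apply: (two (ordS k) (ordS (iter (2 + m) (@ordS n) k))).
    + apply/eqP=> /ordS_inj /(congr1 val); rewrite val_iter.
      have kn := ltn_ord k.
      move=> E; have : (k + 0 == k + (2 + m) %[mod n]).
        by apply/eqP; rewrite addn0 (modn_small kn) -E.
      rewrite eqn_modDl mod0n modn_small; [done|lia].
    + exact: Hs.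
    + have gm1' : ~~ o (ordS (iter (2 + m) (@ordS n) k)).
        by move: gm1; rewrite /g addnS.
      move=> w aw; exfalso; move: (sink _ gm gm1' w); by rewrite aw.
  - apply: (two (ordS k) (ordS (ordS k))); [by rewrite eq_sym Sneq|exact: Hs|].
    move=> w /arc_out; rewrite oss ordSK (negbTE os) /= => /eqP ->.
    exact: sink.
have [allt|nallt] := boolP [forall i, o i].
  exists id; split; first exact: (Bijective (fun _ => erefl) (fun _ => erefl)).
  move=> x y; rewrite /cyc_arc (forallP allt) /=.
  have -> : ~~ o y = false by rewrite (forallP allt).
  by rewrite orbF.
have [allf|nallf] := boolP [forall i, ~~ o i].
  exists (@rev_ord n); split; first exact: (Bijective (@rev_ordK n) (@rev_ordK n)).
  move=> x y; rewrite /cyc_arc (negbTE (forallP allf x)) (forallP allf y) /=.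
  rewrite -(inj_eq (@rev_ord_inj n)) rev_ordS eq_sym.
  apply/eqP/eqP=> [<-|->]; [by rewrite ord_predK|by rewrite ordSK].
exfalso.
move/forallPn: nallf => [i oi]; rewrite negbK in oi.
move/forallPn: nallt => [j oj].
pose g m := o (iter m (@ordS n) i).
have gN : ~~ g (j + n - i).
  rewrite /g.
  have -> : iter (j + n - i) (@ordS n) i = j.
    apply: val_inj; rewrite val_iter.
    have il := ltn_ord i; have jl := ltn_ord j.
    have -> : i + (j + n - i) = j + n by lia.
    by rewrite modnDr modn_small.
  exact: oj.
have [m /andP[/andP[_ gm] gm1]] := @ivt g _ (oi : g 0) gN.
exact: (nosink _ gm gm1).
Qed.
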